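(* Let $\lambda\in\mathbb{R}$, let $r\ge s\ge1$ and $n\ge1$ be integers, and let $k\ge0$ be an integer. Then \[ \frac{(-1)^k}{k!}\sum_{p=0}^{k}(-1)^p\binom{k}{p}\bigg(\prod_{j=1}^{n}\big[(p+(j-1)(r-s))_s-(n-j)\lambda\big]\bigg)= \begin{cases} S_\lambda^{(r,s)}(n,k), & \text{if } 0\le k\le ns,\\ 0, & \text{if } k>ns. \end{cases} \]
   Context: Notation: $(x)_0=1$, $(x)_m=x(x-1)\cdots(x-m+1)$ for $m\ge1$. Let $D=\frac{d}{dx}$ and let $x$ also denote the operator of multiplication by $x$. The generalized degenerate $(r,s)$-Stirling numbers of the second kind $S_\lambda^{(r,s)}(n,k)$, $0\le k\le ns$, are defined by the operator identity \[ \prod_{k=0}^{n-1}\Big(x^{r}D^{s}-k\lambda\, x^{r-s}\Big)=x^{n(r-s)}\sum_{k=0}^{ns}S_\lambda^{(r,s)}(n,k)\,x^{k}D^{k}, \] where the product of operators is written with the factors $k=0,1,\dots,n-1$ from left to right. *)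

(* Defs.v *)
From mathcomp Require Import all_boot all_order all_algebra.
Set Implicit Arguments. Unset Strict Implicit. Unset Printing Implicit Defensive.
Import Order.TTheory GRing.Theory Num.Theory.
Local Open Scope ring_scope.

(* Operators act on polynomials {poly R}; x = multiplication by 'X, D = deriv. *)

Definition stir_factor (R : nzRingType) (lam : R) (r s k : nat) (p : {poly R})
  : {poly R} :=
  'X^r * p^`(s) - (k%:R * lam) *: ('X^(r - s) * p).

(* The operator product  prod_{k=0}^{n-1} (x^r D^s - k lam x^(r-s)),
   factors written left to right k = 0, ..., n-1, i.e. the composition
   F_0 o F_1 o ... o F_(n-1) (so F_(n-1) is applied first). *)
Definition stir_opprod (R : nzRingType) (lam : R) (r s n : nat) (p : {poly R})
  : {poly R} :=
  foldr (fun k q => stir_factor lam r s k q) p (iota 0 n).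

Definition stir_normal (R : nzRingType) (r s n : nat) (S : nat -> R)
  (p : {poly R}) : {poly R} :=
  'X^(n * (r - s)) * \sum_(k < (n * s).+1) S k *: ('X^k * p^`(k)).

(* S (indexed by k, 0 <= k <= ns) are the generalized degenerate (r,s)-Stirling
   numbers of the second kind S_lam^{(r,s)}(n, k): the operator identity holds. *)
Definition is_gen_deg_stirling2 (R : nzRingType) (lam : R) (r s n : nat)
  (S : nat -> R) : Prop :=
  forall p : {poly R}, stir_opprod lam r s n p = stir_normal r s n S p.

Definition stir_formula (R : fieldType) (lam : R) (r s n k : nat) : R :=
  ((-1) ^+ k / (k`!)%:R) *
  \sum_(0 <= p < k.+1)
     ((-1) ^+ p * ('C(k, p))%:R *
      \prod_(1 <= j < n.+1)
        ((((p + (j - 1) * (r - s)) ^_ s)%N)%:R - ((n - j)%N)%:R * lam)).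

(* Main.v *)
Require Import Defs.
From mathcomp Require Import all_boot all_order all_algebra.
From mathcomp Require Import zify.
Set Implicit Arguments. Unset Strict Implicit. Unset Printing Implicit Defensive.
Import Order.TTheory GRing.Theory Num.Theory.
Local Open Scope ring_scope.


Definition Sd {R : realFieldType} (k : nat) (f : nat -> R) : R :=
  \sum_(0 <= p < k.+1) ((-1) ^+ p * ('C(k, p))%:R * f p).

Lemma Sd_S {R : realFieldType} k (f : nat -> R) : Sd k.+1 f = Sd k f - Sd k (fun p => f p.+1).
Proof.
rewrite /Sd !big_mkord big_ord_recl /=.
under eq_bigr => i _ do rewrite /bump leq0n add1n binS natrD exprS mulrDr mulrDl !mulN1r.
rewrite big_split /=.
under eq_bigr => i _ do rewrite !mulNr.
under [X in _ + (_ + X)]eq_bigr => i _ do rewrite !mulNr.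
rewrite !sumrN bin0 expr0 !mul1r.
rewrite [in RHS]big_ord_recl /= bin0 expr0 !mul1r.
rewrite big_ord_recr /= bin_small // mulr0 mul0r addr0.
under [in RHS]eq_bigr => i _ do rewrite /bump leq0n add1n exprS !mulN1r !mulNr.
rewrite sumrN. 
by rewrite addrA.
Qed.

Lemma eq_Sd {R : realFieldType} k (f g : nat -> R) : (forall p, f p = g p) -> Sd k f = Sd k g.
Proof. by move=> h; apply: eq_bigr => i _; rewrite h. Qed.

Lemma Sd_sub {R : realFieldType} k (f g : nat -> R) : Sd k f - Sd k g = Sd k (fun p => f p - g p).
Proof. by rewrite /Sd -sumrB; apply: eq_bigr => i _; rewrite mulrBr. Qed.

Lemma size_diff {R : realFieldType} (q : {poly R}) k : (size q <= k.+1)%N ->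
  (size ((q \Po ('X + 1)) - q)%R <= k)%N.
Proof.
move=> hq; have Hs : size ((q \Po ('X + 1))) = size q.
  by rewrite size_comp_poly2 // size_XaddC.
have Hl : lead_coef ((q \Po ('X + 1))) = lead_coef q.
  by rewrite lead_coef_comp ?size_XaddC // -polyC1 lead_coefXaddC expr1n mulr1.
apply/leq_sizeP => j hj; rewrite coefB.
have [hjs|hjs] := leqP (size q) j.
  by rewrite !nth_default ?subr0 ?Hs.
have -> : j = (size q).-1 by move: hjs hq hj; case: (size q) => /= *; lia.
by rewrite -lead_coefE -{1}Hs -lead_coefE Hl subrr.
Qed.

Lemma Sd_poly {R : realFieldType} k (q : {poly R}) : (size q <= k)%N -> Sd k (fun p => q.[p%:R]) = 0.
Proof.
elim: k q => [|k IH] q hq.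
  move: hq; rewrite leqn0 size_poly_eq0 => /eqP ->.
  by rewrite /Sd big_nat1 horner0 mulr0.
rewrite Sd_S -opprB Sd_sub.
rewrite (@eq_Sd _ _ _ (fun p : nat => ((q \Po ('X + 1)) - q).[p%:R])); last first.
  by move=> p; rewrite hornerD hornerN horner_comp hornerD hornerX hornerC natr1.
by rewrite IH ?oppr0 // size_diff.
Qed.

Lemma natr_ffact {R : realFieldType} a j : ((a ^_ j)%:R : R) = \prod_(0 <= i < j) (a%:R - i%:R).
Proof.
elim: j => [|j IH]; first by rewrite ffactn0 big_geq.
rewrite big_nat_recr //= ffactnSr natrM IH.
have [h|h] := leqP j a; first by rewrite natrB.
by rewrite -IH ffact_small // !mul0r.
Qed.

Definition ffp {R : realFieldType} (j : nat) : {poly R} := \prod_(0 <= i < j) ('X - (i%:R)%:P).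

Lemma horner_ffp {R : realFieldType} j a : (@ffp R j).[a%:R] = (a ^_ j)%:R.
Proof.
rewrite /ffp horner_prod natr_ffact; apply: eq_bigr => i _.
by rewrite hornerXsubC.
Qed.

Lemma size_ffp {R : realFieldType} j : size (@ffp R j) = j.+1.
Proof. by rewrite /ffp size_prod_XsubC size_iota subn0. Qed.

Lemma size_prod_le {R : realFieldType} (I : Type) (rr : seq I) (F : I -> {poly R}) s :
  (forall i, size (F i) <= s.+1)%N ->
  (size (\prod_(i <- rr) F i)%R <= size rr * s + 1)%N.
Proof.
move=> hF; elim: rr => [|x rr IH]; first by rewrite big_nil size_poly1.
rewrite big_cons; apply: leq_trans (size_polyMleq _ _) _.
have := hF x; move: IH => /=; lia.
Qed.

Lemma Sd_ffact {R : realFieldType} k j : Sd k (fun p => (p ^_ j)%:R : R) =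
  if j == k then (-1) ^+ k * (k`!)%:R else 0 :> R.
Proof.
have [hjk|hjk|->] := ltngtP j k.
- rewrite (@eq_Sd _ _ _ (fun p => (ffp j).[p%:R])); last by move=> p; rewrite horner_ffp.
  by rewrite Sd_poly // size_ffp.
- rewrite /Sd big_mkord big1 // => i _.
  by rewrite ffact_small ?mulr0 //; apply: leq_trans (ltn_ord i) hjk.
- rewrite /Sd big_nat_recr //= big_mkord big1 ?add0r.
    by rewrite binn mulr1 ffactnn.
  by move=> i _; rewrite ffact_small ?mulr0.
Qed.

Lemma Sd_sum {R : realFieldType} k N (a : nat -> R) (g : nat -> nat -> R) :
  Sd k (fun p => \sum_(j < N) a j * g j p) = \sum_(j < N) a j * Sd k (g j).
Proof.
rewrite /Sd; under eq_bigr => p _ do rewrite mulr_sumr.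
rewrite exchange_big /=; apply: eq_bigr => j _; rewrite mulr_sumr.
by apply: eq_bigr => p _; rewrite mulrCA mulrA.
Qed.


Lemma factor_X (R : realFieldType) (lam : R) r s a c e : (s <= r)%N ->
  stir_factor lam r s a (c *: 'X^e) =
  (c * ((e ^_ s)%:R - a%:R * lam)) *: 'X^(e + (r - s)).
Proof.
move=> hsr; rewrite /stir_factor derivnZ derivnXn -scaler_nat scalerA.
rewrite -!scalerAr -!exprD scalerA.
have [hes|hes] := ltnP e s.
  rewrite ffact_small // mulr0 scale0r sub0r (addnC (r - s)%N) -scaleNr.
  by congr (_ *: _); rewrite sub0r mulrN mulrC.
have E : (r + (e - s) = e + (r - s))%N.
  by lia.
rewrite E (addnC (r - s)%N) -scalerBl.
by rewrite mulrBr [c * (_ * lam)]mulrC.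
Qed.


Lemma foldr_X (R : realFieldType) (lam : R) r s m a l : (s <= r)%N ->
  foldr (fun k q => stir_factor lam r s k q) 'X^m (iota a l) =
  (\prod_(i < l) (((m + i * (r - s)) ^_ s)%:R - ((a + l - 1 - i)%N)%:R * lam))
    *: 'X^(m + l * (r - s)).
Proof.
move=> hsr; elim: l a => [|l IH] a.
  by rewrite big_ord0 scale1r mul0n addn0.
rewrite /= IH factor_X // big_ord_recr /=.
have -> : (m + l * (r - s) + (r - s) = m + l.+1 * (r - s))%N by rewrite mulSn; lia.
have -> : (a + l.+1 - 1 - l = a)%N by lia.
congr (_ * _ *: _); apply: eq_bigr => i _.
have -> : (a.+1 + l - 1 - i = a + l.+1 - 1 - i)%N by lia.
by [].
Qed.

Definition Gp (R : realFieldType) (lam : R) (r s n p : nat) : R :=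
  \prod_(1 <= j < n.+1)
        ((((p + (j - 1) * (r - s)) ^_ s)%N)%:R - ((n - j)%N)%:R * lam).

Lemma opprod_X (R : realFieldType) (lam : R) r s n m : (s <= r)%N ->
  stir_opprod lam r s n 'X^m = Gp lam r s n m *: 'X^(m + n * (r - s)).
Proof.
move=> hsr; rewrite /stir_opprod foldr_X //; congr (_ *: _).
rewrite /Gp big_add1 /= big_mkord; apply: eq_bigr => i _.
have -> : (i.+1 - 1 = i)%N by lia.
have -> : (0 + n - 1 - i = n - i.+1)%N by lia.
by [].
Qed.

Lemma normal_coef (R : realFieldType) r s n (S : nat -> R) m :
  (stir_normal r s n S 'X^m)`_(m + n * (r - s)) =
  \sum_(k < (n * s).+1) S k * (m ^_ k)%:R.
Proof.
rewrite /stir_normal coefXnM ltnNge leq_addl /= addnK coef_sum.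
apply: eq_bigr => k _; rewrite coefZ derivnXn mulrnAr coefMn -exprD.
have [hk|hk] := leqP k m.
  by rewrite subnKC // coefXn eqxx mulr_natr.
by rewrite ffact_small // !mulr0n mulr0.
Qed.

Lemma Gp_poly (R : realFieldType) (lam : R) r s n :
  exists Q : {poly R}, (size Q <= n * s + 1)%N /\
    forall p, Q.[p%:R] = Gp lam r s n p.
Proof.
pose F j := ((@ffp R s \Po ('X + (((j - 1) * (r - s))%N)%:R%:P)) - (((n - j)%N)%:R * lam)%:P).
exists (\prod_(1 <= j < n.+1) F j); split.
  have := @size_prod_le R _ (index_iota 1 n.+1) F s.
  rewrite size_iota; have -> : (n.+1 - 1 = n)%N by lia.
  apply=> j; apply: leq_trans (size_polyD _ _) _; rewrite size_polyN geq_max.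
  rewrite size_comp_poly2 ?size_XaddC // size_ffp leqnn /=.
  by apply: leq_trans (size_polyC_leq1 _) _.
move=> p; rewrite horner_prod /Gp; apply: eq_bigr => j _.
by rewrite hornerD hornerN hornerC horner_comp hornerD hornerX hornerC -natrD horner_ffp.
Qed.

Theorem theorem3 (R : realFieldType) (lam : R) (r s n : nat) :
  (1 <= s)%N -> (s <= r)%N -> (1 <= n)%N ->
  (forall S : nat -> R, is_gen_deg_stirling2 lam r s n S ->
     forall k : nat, (k <= n * s)%N -> stir_formula lam r s n k = S k)
  /\ (forall k : nat, (n * s < k)%N -> stir_formula lam r s n k = 0).
Proof.
move=> hs hsr hn; split.
- move=> S hS k hk.
  have HG : forall p, Gp lam r s n p = \sum_(j < (n*s).+1) S j * (p ^_ j)%:R.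
    move=> p; have := congr1 (fun q : {poly R} => q`_(p + n * (r - s))%N) (hS 'X^p).
    by rewrite /= opprod_X // coefZ coefXn eqxx mulr1 normal_coef.
  have -> : stir_formula lam r s n k = ((-1)^+k / (k`!)%:R) * Sd k (Gp lam r s n) by [].
  rewrite (@eq_Sd R k _ _ HG) (@Sd_sum R k _ S (fun j p => (p ^_ j)%:R)).
  under eq_bigr => j _ do rewrite Sd_ffact.
  have hk' : (k < (n * s).+1)%N by [].
  rewrite (bigD1 (Ordinal hk')) //= eqxx.
  have -> : \sum_(i < (n * s).+1 | i != Ordinal hk')
      S i * (if (i : nat) == k then (-1) ^+ k * (k`!)%:R else 0) = 0.
    by apply: big1 => j hj; rewrite ifN ?mulr0.
  rewrite addr0.
  have hf : (k`!)%:R != 0 :> R.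
    by rewrite pnatr_eq0 -lt0n fact_gt0.
  have e : (-1)^+k * (-1)^+k = 1 :> R.
    by rewrite -exprMn mulrNN mulr1 expr1n.
  by rewrite mulrCA mulrACA e (mulVf hf) mul1r mulr1.
- move=> k hk.
  have -> : stir_formula lam r s n k = ((-1)^+k / (k`!)%:R) * Sd k (Gp lam r s n) by [].
  have [Q [hQ hQe]] := Gp_poly lam r s n.
  rewrite -(@eq_Sd R k _ _ hQe) Sd_poly ?mulr0 //.
  by apply: leq_trans hQ _; rewrite addn1.
Qed.
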